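(* Let $F=\langle f_1,\ldots,f_k\rangle$ be a normalized solution to an instance $(\mathcal{T}_{initial},\mathcal{T}_{final},k)$ of Flip Distance, and let $C$ be a component of $\mathcal{D}_F$. Let $f_i$ and $f_h$, with $i<h$ and $\epsilon(f_i)\ne\epsilon(f_h)$, be two flips in $C$ such that $\phi(f_h)$ crosses $\epsilon(f_i)$ and $\epsilon(f_i)$ is not flipped between $f_i$ and $f_h$ (i.e., there is no $p$ with $i<p<h$ and $\epsilon(f_p)=\epsilon(f_i)$). Then there is a directed path from $f_i$ to $f_h$ in $C$.
   Context: A triangulation of a finite point set $\mathcal{P}$ in the plane is a partition of the convex hull of $\mathcal{P}$ into triangles whose vertex set is $\mathcal{P}$. For an interior edge $e$ of a triangulation $\mathcal{T}$, the quadrilateral associated with $e$ is the union of the two triangles of $\mathcal{T}$ sharing $e$. A flip $f$ with underlying edge $\epsilon(f)=e$ is admissible in $\mathcal{T}$ if $e\in\mathcal{T}$ and its associated quadrilateral is convex; performing it replaces $e$ by the other diagonal $\phi(f)$ of that quadrilateral. Two distinct edges share a triangle in $\mathcal{T}$ if they are edges of the same triangle of $\mathcal{T}$; two edges between points of $\mathcal{P}$ cross if they intersect in their interiors. A sequence $F=\langle f_1,\ldots,f_r\rangle$ is valid with respect to $\mathcal{T}$ if there are triangulations $\mathcal{T}_0=\mathcal{T},\mathcal{T}_1,\ldots,\mathcal{T}_r$ such that $f_i$ is admissible in $\mathcal{T}_{i-1}$ and performing it yields $\mathcal{T}_i$; then we write $\mathcal{T}\xrightarrow{F}\mathcal{T}_r$.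 Flips in a sequence are distinct objects even if they have the same underlying edge. For $1\le i<j\le r$, flip $f_j$ is adjacent to $f_i$ (written $f_i\to f_j$) if (1) either $\phi(f_i)=\epsilon(f_j)$ or $\phi(f_i)$ and $\epsilon(f_j)$ share a triangle in $\mathcal{T}_{j-1}$, and (2) there is no $p$ with $i<p<j$ and $\epsilon(f_p)=\phi(f_i)$. $\mathcal{D}_F$ is the directed acyclic graph whose nodes are the flips of $F$ and whose arcs are the pairs $f_i\to f_j$; a component of it is a weakly connected component. The flip distance between two triangulations is the minimum length of a valid sequence transforming one into the other. An instance $(\mathcal{T}_{initial},\mathcal{T}_{final},k)$ of Flip Distance consists of two triangulations of $\mathcal{P}$ and $k\in\mathbb{N}$; a solution is a valid sequence $F$ of length $k$ with $\mathcal{T}_{initial}\xrightarrow{F}\mathcal{T}_{final}$, where $k$ is the flip distance between them. For a solution $F=\langle f_1,\ldots,f_k\rangle$, $\mathcal{T}_j$ denotes the outcome of applying $\langle f_1,\ldots,f_j\rangle$ to $\mathcal{T}_{initial}$. A changed edge is an edge of $\mathcal{T}_{initial}$ not in $\mathcal{T}_{final}$; a component of $\mathcal{D}_F$ is essential if it contains a flip whose underlying edge is a changed edge. A solution $F$ is normalized if every component of $\mathcal{D}_F$ is essential and the flips of each component of $\mathcal{D}_F$ appear as a consecutive block in $F$. *)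

(* Defs.v *)
From HB Require Import structures.
From mathcomp Require Import all_boot all_order all_algebra.
Unset Printing Implicit Defensive.
Import Order.TTheory GRing.Theory Num.Theory.
Local Open Scope ring_scope.

Section Geometry.
Variables (R : realFieldType) (n : nat) (P : 'I_n -> (R * R)%type).

Definition conv (S : {set 'I_n}) (x : R * R) : Prop :=
  exists w : 'I_n -> R,
    [/\ (forall i, 0 <= w i), (forall i, i \notin S -> w i = 0),
        \sum_i w i = 1 &
        x = (\sum_i w i * (P i).1, \sum_i w i * (P i).2)].

Definition lerp (a b : R * R) (s : R) : R * R :=
  ((1 - s) * a.1 + s * b.1, (1 - s) * a.2 + s * b.2).

Definition convex_set (S : R * R -> Prop) : Prop :=
  forall x y l, S x -> S y -> 0 <= l <= 1 -> S (lerp x y l).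

Definition orient (a b c : R * R) : R :=
  (b.1 - a.1) * (c.2 - a.2) - (b.2 - a.2) * (c.1 - a.1).

Definition triangle (t : {set 'I_n}) : Prop :=
  exists a b c, t = [set a; b; c] /\ orient (P a) (P b) (P c) != 0.

(* A triangulation of P: a set of non-degenerate triangles forming a
   simplicial complex (any two meet in the hull of their common vertices)
   whose union is the convex hull of P and whose vertex set is P. *)
Definition triangulation (T : {set {set 'I_n}}) : Prop :=
  [/\ (forall t, t \in T -> triangle t),
      (forall t1 t2, t1 \in T -> t2 \in T ->
         forall x, (conv t1 x /\ conv t2 x) <-> conv (t1 :&: t2) x),
      (forall x, conv setT x <-> exists2 t, t \in T & conv t x) &
      (forall v, exists2 t, t \in T & v \in t)].

Definition crosses (e e' : {set 'I_n}) : Prop :=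
  e != e' /\
  exists a b c d (s u : R),
    [/\ e = [set a; b], e' = [set c; d], 0 < s < 1, 0 < u < 1 &
        lerp (P a) (P b) s = lerp (P c) (P d) u].

End Geometry.
Arguments conv {R n}. Arguments lerp {R}. Arguments convex_set {R}. Arguments orient {R}.
Arguments triangle {R n}. Arguments triangulation {R n}. Arguments crosses {R n}.

Section Combinatorics.
Variable n : nat.
Implicit Types (T : {set {set 'I_n}}) (e : {set 'I_n}) (F : seq {set 'I_n}).

Definition edges T : {set {set 'I_n}} :=
  [set e : {set 'I_n} | (#|e| == 2)%N && [exists t in T, e \subset t]].

(* the other diagonal of the quadrilateral associated with e in T *)
Definition phi T e : {set 'I_n} :=
  (\bigcup_(t in T | e \subset t) t) :\: e.

Definition flip_res T e : {set {set 'I_n}} :=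
  [set t in T | ~~ (e \subset t)] :|: [set phi T e :|: [set v] | v in e].

Definition outcome T F (j : nat) : {set {set 'I_n}} :=
  foldl flip_res T (take j F).

Definition share_tri T e e' : bool :=
  (e != e') && [exists t in T, (e \subset t) && (e' \subset t)].

(* underlying edge and new edge of the flip with (0-based) index a *)
Definition eps F (a : nat) : {set 'I_n} := nth set0 F a.
Definition phiF T F (a : nat) : {set 'I_n} := phi (outcome T F a) (eps F a).

(* arc f_a -> f_b of D_F (0-based indices; T_{b} is the triangulation in
   which flip b is performed) *)
Definition adjD T F (a b : 'I_(size F)) : bool :=
  [&& (a < b)%N,
      (phiF T F a == eps F b) || share_tri (outcome T F b) (phiF T F a) (eps F b)
    & [forall p : 'I_(size F),
         ((a < p)%N && (p < b)%N) ==> (eps F p != phiF T F a)]].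

Definition wadj T F : rel 'I_(size F) := fun a b => adjD T F a b || adjD T F b a.

Definition component T F (C : {set 'I_(size F)}) : Prop :=
  exists v : 'I_(size F), C = [set u | connect (wadj T F) v u].

Definition changed Ti Tf : {set {set 'I_n}} := edges Ti :\: edges Tf.

Definition essential Ti Tf F (C : {set 'I_(size F)}) : Prop :=
  exists2 q, q \in C & eps F q \in changed Ti Tf.

Definition normalized Ti Tf F : Prop :=
  forall C : {set 'I_(size F)}, component Ti F C ->
    essential Ti Tf F C /\
    (forall a b c : 'I_(size F), (a <= c)%N -> (c <= b)%N ->
        a \in C -> b \in C -> c \in C).

End Combinatorics.
Arguments edges {n}. Arguments phi {n}. Arguments flip_res {n}. Arguments outcome {n}.
Arguments share_tri {n}. Arguments eps {n}. Arguments phiF {n}. Arguments adjD {n}.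
Arguments wadj {n}. Arguments component {n}. Arguments changed {n}. Arguments essential {n}.
Arguments normalized {n}.

Section Flips.
Variables (R : realFieldType) (n : nat) (P : 'I_n -> (R * R)%type).

(* e is an interior edge of T (shared by two triangles) whose quadrilateral is convex *)
Definition admissible (T : {set {set 'I_n}}) (e : {set 'I_n}) : Prop :=
  [/\ e \in edges T, #|[set t in T | e \subset t]| = 2 &
      convex_set (fun x => exists t, [/\ t \in T, e \subset t & conv P t x])].

Definition valid (T : {set {set 'I_n}}) (F : seq {set 'I_n}) (T' : {set {set 'I_n}}) : Prop :=
  [/\ triangulation P T,
      (forall j, (j < size F)%N ->
          admissible (outcome T F j) (eps F j) /\ triangulation P (outcome T F j.+1)) &
      outcome T F (size F) = T'].

Definition flip_distance_is (Ti Tf : {set {set 'I_n}}) (k : nat) : Prop :=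
  (exists G, valid Ti G Tf /\ size G = k) /\
  (forall G, valid Ti G Tf -> (k <= size G)%N).

Definition solution (Ti Tf : {set {set 'I_n}}) (k : nat) (F : seq {set 'I_n}) : Prop :=
  [/\ triangulation P Ti, triangulation P Tf, valid Ti F Tf, size F = k &
      flip_distance_is Ti Tf k].

End Flips.
Arguments admissible {R n}. Arguments valid {R n}. Arguments flip_distance_is {R n}. Arguments solution {R n}.

(* Main.v *)
Require Import Defs.
From mathcomp Require Import all_boot all_order all_algebra.
From mathcomp Require Import ring lra.
Import Order.TTheory GRing.Theory Num.Theory.
Set Implicit Arguments. Unset Strict Implicit.

Section Geo.
Variables (R : realFieldType) (n : nat) (P : 'I_n -> (R * R)%type).
Local Open Scope ring_scope.

Definition wsum (w : 'I_n -> R) : R * R :=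
  (\sum_i w i * (P i).1, \sum_i w i * (P i).2).

Definition ind (a : 'I_n) (c : R) : 'I_n -> R := fun i => if i == a then c else 0.

Lemma sum_ind (a : 'I_n) c (f : 'I_n -> R) : \sum_i ind a c i * f i = c * f a.
Proof.
rewrite (bigD1 a) //= big1 ?addr0; first by rewrite /ind eqxx.
by move=> i /negbTE; rewrite /ind => ->; rewrite mul0r.
Qed.

Lemma sum_ind1 (a : 'I_n) c : \sum_i ind a c i = c.
Proof.
transitivity (\sum_i ind a c i * 1); first by apply: eq_bigr => i _; rewrite mulr1.
by rewrite sum_ind mulr1.
Qed.

Lemma sum3 (f : 'I_n -> R) p q r : p != q -> q != r -> p != r ->
  (forall i, i \notin [set p; q; r] -> f i = 0) -> \sum_i f i = f p + f q + f r.
Proof.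
move=> pq qr pr H.
rewrite (bigD1 p) //= (bigD1 q) /= ?(eq_sym q) // (bigD1 r) /= ?(eq_sym r) ?pr ?qr //.
rewrite big1 ?addr0 ?addrA //.
move=> i /andP[/andP[ip iq] ir]; apply: H; rewrite !inE !negb_or.
by rewrite ip iq ir.
Qed.

Lemma lin3 (a1 a2 a3 x1 x2 x3 y1 y2 y3 : R) :
  a1 + a2 + a3 = 0 -> a1 * x1 + a2 * x2 + a3 * x3 = 0 ->
  a1 * y1 + a2 * y2 + a3 * y3 = 0 -> orient (x1, y1) (x2, y2) (x3, y3) != 0 ->
  [/\ a1 = 0, a2 = 0 & a3 = 0].
Proof.
rewrite /orient /= => h0 h1 h2 hD.
have e2 : a2 * ((x2 - x1) * (y3 - y1) - (y2 - y1) * (x3 - x1)) =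
   (y3 - y1) * ((a1 * x1 + a2 * x2 + a3 * x3) - x1 * (a1 + a2 + a3))
 - (x3 - x1) * ((a1 * y1 + a2 * y2 + a3 * y3) - y1 * (a1 + a2 + a3)) by ring.
have e3 : a3 * ((x2 - x1) * (y3 - y1) - (y2 - y1) * (x3 - x1)) =
 - ((y2 - y1) * ((a1 * x1 + a2 * x2 + a3 * x3) - x1 * (a1 + a2 + a3))
 - (x2 - x1) * ((a1 * y1 + a2 * y2 + a3 * y3) - y1 * (a1 + a2 + a3))) by ring.
rewrite h0 h1 h2 !(mulr0, subr0, oppr0) in e2 e3.
move/eqP: e2; rewrite mulf_eq0 (negbTE hD) orbF => /eqP a20.
move/eqP: e3; rewrite mulf_eq0 (negbTE hD) orbF => /eqP a30.
split=> //; move: h0; rewrite a20 a30 !addr0 //.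
Qed.

Lemma orient_neq (a b c : R * R) : orient a b c != 0 -> [/\ a != b, b != c & a != c].
Proof.
move=> h; split; apply/eqP=> e; move: h; rewrite e /orient.
- by rewrite !subrr !mul0r subrr eqxx.
- by rewrite [X in X - _]mulrC subrr eqxx.
- by rewrite !subrr !mulr0 subrr eqxx.
Qed.

Lemma tri_neq (p q r : 'I_n) : orient (P p) (P q) (P r) != 0 ->
  [/\ p != q, q != r & p != r].
Proof.
case/orient_neq => h1 h2 h3; split; apply/eqP=> e; subst;
  by [move/eqP: h1 | move/eqP: h2 | move/eqP: h3].
Qed.

Lemma uniq_w (p q r : 'I_n) (w1 w2 : 'I_n -> R) :
  orient (P p) (P q) (P r) != 0 ->
  (forall i, i \notin [set p; q; r] -> w1 i = 0) ->
  (forall i, i \notin [set p; q; r] -> w2 i = 0) ->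
  \sum_i w1 i = 1 -> \sum_i w2 i = 1 -> wsum w1 = wsum w2 ->
  forall i, w1 i = w2 i.
Proof.
move=> hD h1 h2 s1 s2 [e1 e2].
have [pq qr pr] := tri_neq hD.
have S : forall (f : 'I_n -> R), (forall i, i \notin [set p; q; r] -> f i = 0) ->
   \sum_i f i = f p + f q + f r by move=> f; exact: sum3.
move: s1 s2 e1 e2.
rewrite (S w1) // (S w2) // (S (fun i => w1 i * (P i).1)); last by move=> i /h1 ->; rewrite mul0r.
rewrite (S (fun i => w2 i * (P i).1)); last by move=> i /h2 ->; rewrite mul0r.
rewrite (S (fun i => w1 i * (P i).2)); last by move=> i /h1 ->; rewrite mul0r.
rewrite (S (fun i => w2 i * (P i).2)); last by move=> i /h2 ->; rewrite mul0r.
move=> s1 s2 e1 e2.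
have : orient ((P p).1, (P p).2) ((P q).1, (P q).2) ((P r).1, (P r).2) != 0.
  by rewrite -!surjective_pairing.
move/(lin3 (a1 := w1 p - w2 p) (a2 := w1 q - w2 q) (a3 := w1 r - w2 r)).
case.
- by rewrite -[0](subrr 1) -{1}s1 -s2; ring.
- by rewrite -[0](subrr (w1 p * (P p).1 + w1 q * (P q).1 + w1 r * (P r).1)) {2}e1; ring.
- by rewrite -[0](subrr (w1 p * (P p).2 + w1 q * (P q).2 + w1 r * (P r).2)) {2}e2; ring.
move=> /eqP; rewrite subr_eq0 => /eqP ep /eqP; rewrite subr_eq0 => /eqP eq' /eqP; rewrite subr_eq0 => /eqP er.
move=> i; case: (boolP (i \in [set p; q; r])) => [|hi]; last by rewrite h1 ?h2.
by rewrite !inE => /orP[/orP[]|] /eqP->.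
Qed.


Lemma wsum_ind u : wsum (ind u 1) = P u.
Proof. by rewrite /wsum !sum_ind !mul1r -surjective_pairing. Qed.

Definition wl (a b : 'I_n) (s : R) : 'I_n -> R := fun i => ind a (1 - s) i + ind b s i.

Lemma sum_wl a b s (f : 'I_n -> R) : \sum_i wl a b s i * f i = (1 - s) * f a + s * f b.
Proof.
rewrite -!sum_ind -big_split /=; apply: eq_bigr => i _; by rewrite /wl mulrDl.
Qed.

Lemma sum_wl1 a b s : \sum_i wl a b s i = 1.
Proof.
transitivity (\sum_i wl a b s i * 1); first by apply: eq_bigr => i _; rewrite mulr1.
by rewrite sum_wl !mulr1 subrK.
Qed.

Lemma wsum_wl a b s : wsum (wl a b s) = lerp (P a) (P b) s.
Proof. by rewrite /wsum !sum_wl. Qed.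

Lemma wl_at a b s : a != b -> wl a b s a = 1 - s /\ wl a b s b = s.
Proof.
move=> ab; rewrite /wl /ind eqxx (negbTE ab) eq_sym (negbTE ab) eqxx.
by rewrite addr0 add0r.
Qed.

Lemma wl_out a b s i : i != a -> i != b -> wl a b s i = 0.
Proof. by move=> /negbTE ha /negbTE hb; rewrite /wl /ind ha hb addr0. Qed.

Lemma conv_vertex (t : {set 'I_n}) u : u \in t -> conv P t (P u).
Proof.
move=> ut; exists (ind u 1); split.
- by move=> i; rewrite /ind; case: ifP.
- by move=> i hi; rewrite /ind; case: eqP => // e; move: hi; rewrite e ut.
- exact: sum_ind1.
- by have := wsum_ind u; rewrite /wsum => ->.
Qed.

Lemma conv_lerp (t : {set 'I_n}) a b s : a \in t -> b \in t -> 0 <= s <= 1 ->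
  conv P t (lerp (P a) (P b) s).
Proof.
move=> ha hb /andP[s0 s1]; exists (wl a b s); split.
- move=> i; rewrite /wl /ind; case: ifP; case: ifP => _ _; rewrite ?addr0 ?add0r //;
  try lra.
- move=> i hi; apply: wl_out; apply/eqP=> e; move: hi; by rewrite e ?ha ?hb.
- exact: sum_wl1.
- by have := wsum_wl a b s; rewrite /wsum => ->.
Qed.

Lemma vert_in (T : {set {set 'I_n}}) t u : triangulation P T -> t \in T ->
  conv P t (P u) -> u \in t.
Proof.
case=> Htri Hsc _ Hcov Ht Hc.
have [t' Ht' Hu] := Hcov u.
have [w [w0 wS w1 wx]] := (Hsc t t' Ht Ht' (P u)).1 (conj Hc (conv_vertex Hu)).
have [p [q [r [Et' hD]]]] := Htri t' Ht'.
have E : w u = ind u 1 u.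
  apply: (uniq_w hD) => //.
  - by move=> i hi; apply: wS; rewrite inE negb_and Et' hi orbT.
  - move=> i hi; rewrite /ind; case: eqP => // e; move: hi; by rewrite e -Et' Hu.
  - exact: sum_ind1.
  - by rewrite wsum_ind.
move: E; rewrite /ind eqxx.
case: (boolP (u \in t :&: t')) => [|hu]; first by rewrite inE => /andP[].
by rewrite wS // => /eqP; rewrite eq_sym oner_eq0.
Qed.


Lemma no_pt_edge (T : {set {set 'I_n}}) t a b u s : triangulation P T -> t \in T ->
  a \in t -> b \in t -> a != b -> 0 < s < 1 -> P u = lerp (P a) (P b) s -> False.
Proof.
move=> HT Ht ha hb ab /andP[s0 s1] Hu.
have Hc : conv P t (P u) by rewrite Hu; apply: conv_lerp => //; rewrite !ltW.
have ut := vert_in HT Ht Hc.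
have [Htri _ _ _] := HT.
have [p [q [r [Et hD]]]] := Htri t Ht.
have E : wl a b s a = ind u 1 a.
  apply: (uniq_w hD) => //.
  - move=> i hi; apply: wl_out; apply/eqP=> e; move: hi; by rewrite e -Et ?ha ?hb.
  - move=> i hi; rewrite /ind; case: eqP => // e; move: hi; by rewrite e -Et ut.
  - exact: sum_wl1.
  - exact: sum_ind1.
  - by rewrite wsum_wl wsum_ind.
move: E; rewrite (wl_at s ab).1 /ind; case: ifP => _; lra.
Qed.

Lemma edge2 (T : {set {set 'I_n}}) a b : [set a; b] \in edges T ->
  a != b /\ exists2 t, t \in T & (a \in t) && (b \in t).
Proof.
rewrite inE => /andP[/eqP c /exists_inP [t Ht sub]]; split.
  by move: c; rewrite cards2; case: (a != b).
exists t => //; apply/andP; split; apply: (subsetP sub); by rewrite !inE eqxx ?orbT.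
Qed.

Lemma nocross (T : {set {set 'I_n}}) a b c d s u : triangulation P T ->
  [set a; b] \in edges T -> [set c; d] \in edges T -> 0 < s < 1 -> 0 < u < 1 ->
  lerp (P a) (P b) s = lerp (P c) (P d) u -> [set a; b] = [set c; d].
Proof.
move=> HT /edge2 [ab [t1 Ht1 /andP[a1 b1]]] /edge2 [cd [t2 Ht2 /andP[c2 d2]]] hs hu Ex.
have [Htri Hsc _ _] := HT.
have C1 : conv P t1 (lerp (P a) (P b) s) by apply: conv_lerp => //; case/andP: hs => ? ?; rewrite !ltW.
have C2 : conv P t2 (lerp (P a) (P b) s) by rewrite Ex; apply: conv_lerp => //; case/andP: hu => ? ?; rewrite !ltW.
have [w [w0 wS w1 wx]] := (Hsc t1 t2 Ht1 Ht2 _).1 (conj C1 C2).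
have [p [q [r [Et1 hD1]]]] := Htri t1 Ht1.
have [p' [q' [r' [Et2 hD2]]]] := Htri t2 Ht2.
have E1 : forall i, w i = wl a b s i.
  apply: (uniq_w hD1) => //.
  - by move=> i hi; apply: wS; rewrite inE negb_and Et1 hi.
  - move=> i hi; apply: wl_out; apply/eqP=> e; move: hi; by rewrite e -Et1 ?a1 ?b1.
  - exact: sum_wl1.
  - by rewrite wsum_wl /wsum -wx.
have E2 : forall i, w i = wl c d u i.
  apply: (uniq_w hD2) => //.
  - by move=> i hi; apply: wS; rewrite inE negb_and Et2 hi orbT.
  - move=> i hi; apply: wl_out; apply/eqP=> e; move: hi; by rewrite e -Et2 ?c2 ?d2.
  - exact: sum_wl1.
  - by rewrite wsum_wl /wsum -wx Ex.
have key : forall x, wl a b s x != 0 -> x \in [set c; d].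
  move=> x; rewrite -E1 E2; rewrite !inE; case: (boolP (x == c)) => //= xc.
  case: (boolP (x == d)) => //= xd; by rewrite wl_out ?eqxx.
have [wa wb] := wl_at s ab.
apply/eqP; rewrite eqEcard !cards2 ab cd leqnn andbT.
apply/subsetP => x; rewrite !inE => /orP[]/eqP->.
- have := key a; rewrite !inE; apply; rewrite wa; case/andP: hs => ? ?; apply/eqP; lra.
- have := key b; rewrite !inE; apply; rewrite wb; case/andP: hs => ? ?; apply/eqP; lra.
Qed.


Definition comb3 (p q r : 'I_n) (l1 l2 l3 : R) : R * R :=
  (l1 * (P p).1 + l2 * (P q).1 + l3 * (P r).1, l1 * (P p).2 + l2 * (P q).2 + l3 * (P r).2).

Lemma conv3_coords t p q r y : t = [set p; q; r] -> orient (P p) (P q) (P r) != 0 ->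
  conv P t y -> exists l1 l2 l3, [/\ 0 <= l1, 0 <= l2, 0 <= l3, l1 + l2 + l3 = 1 &
     y = comb3 p q r l1 l2 l3].
Proof.
move=> Et hD [w [w0 wS w1 wx]].
have [pq qr pr] := tri_neq hD.
have S : forall (f : 'I_n -> R), (forall i, i \notin [set p; q; r] -> f i = 0) ->
   \sum_i f i = f p + f q + f r by move=> f; exact: sum3.
exists (w p), (w q), (w r); split => //.
  by rewrite -w1 S // -Et.
rewrite wx /comb3 (S (fun i => w i * (P i).1)); last by move=> i; rewrite -Et => /wS ->; rewrite mul0r.
by rewrite (S (fun i => w i * (P i).2)) //; move=> i; rewrite -Et => /wS ->; rewrite mul0r.
Qed.

Lemma coords_conv t p q r l1 l2 l3 : t = [set p; q; r] -> 0 <= l1 -> 0 <= l2 -> 0 <= l3 ->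
  l1 + l2 + l3 = 1 -> conv P t (comb3 p q r l1 l2 l3).
Proof.
move=> Et h1 h2 h3 hs.
have E : forall f : 'I_n -> R, \sum_i (ind p l1 i + ind q l2 i + ind r l3 i) * f i =
   l1 * f p + l2 * f q + l3 * f r.
  by move=> f; rewrite -!sum_ind -!big_split; apply: eq_bigr => i _; rewrite !mulrDl.
exists (fun i => ind p l1 i + ind q l2 i + ind r l3 i); split.
- by move=> i; rewrite /ind; do 3 case: ifP => _; rewrite ?addr0 ?add0r //; apply: addr_ge0 => //; apply: addr_ge0.
- move=> i; rewrite Et /ind !inE !negb_or => /andP[/andP[/negbTE -> /negbTE ->] /negbTE ->].
  by rewrite !addr0.
- transitivity (\sum_i (ind p l1 i + ind q l2 i + ind r l3 i) * 1).
    by apply: eq_bigr => i _; rewrite mulr1.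
  by rewrite E !mulr1.
- by rewrite /comb3 !E.
Qed.

Lemma bary_ex p q r y : orient (P p) (P q) (P r) != 0 ->
  exists l1 l2 l3, l1 + l2 + l3 = 1 /\ y = comb3 p q r l1 l2 l3.
Proof.
move=> hD.
exists (orient y (P q) (P r) / orient (P p) (P q) (P r)),
       (orient (P p) y (P r) / orient (P p) (P q) (P r)),
       (orient (P p) (P q) y / orient (P p) (P q) (P r)).
move: hD; rewrite /comb3 /orient.
case: (P p) => [a1 a2]; case: (P q) => [b1 b2]; case: (P r) => [c1 c2]; case: y => [y1 y2] /= hD.
split; first by field.
congr pair; field => //.
Qed.

Definition fb (a b : R) : R := if b < 0 then a / (a - b) else 1.

Lemma fb_props a b : 0 <= a -> [/\ 0 <= fb a b, fb a b <= 1, (b < 0 -> fb a b < 1),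
  (forall t, 0 <= t -> t <= fb a b -> 0 <= (1 - t) * a + t * b) &
  (fb a b < 1 -> (1 - fb a b) * a + fb a b * b = 0)].
Proof.
move=> ha; rewrite /fb; case: ltP => hb.
- have hD : 0 < a - b by lra.
  have hD' : a - b != 0 by rewrite gt_eqF.
  split.
  + by apply: divr_ge0 => //; rewrite ltW.
  + by rewrite ler_pdivrMr // mul1r; lra.
  + by move=> _; rewrite ltr_pdivrMr // mul1r; lra.
  + move=> t t0; rewrite ler_pdivlMr // => h.
    have -> : (1 - t) * a + t * b = a - t * (a - b) by ring.
    lra.
  + move=> _.
    have -> : (1 - a / (a - b)) * a + a / (a - b) * b = a - a / (a - b) * (a - b) by ring.
    by rewrite divfK // subrr.
- split => //.
  + move=> t t0 t1; apply: addr_ge0; apply: mulr_ge0 => //; lra.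
  + by rewrite ltxx.
Qed.

Lemma tau_pick (a1 a2 a3 b1 b2 b3 : R) : 0 <= a1 -> 0 <= a2 -> 0 <= a3 ->
  [\/ b1 < 0, b2 < 0 | b3 < 0] ->
  exists t, [/\ 0 <= t, t < 1,
    [/\ 0 <= (1 - t) * a1 + t * b1, 0 <= (1 - t) * a2 + t * b2 & 0 <= (1 - t) * a3 + t * b3] &
    [\/ (1 - t) * a1 + t * b1 = 0, (1 - t) * a2 + t * b2 = 0 | (1 - t) * a3 + t * b3 = 0]].
Proof.
move=> h1 h2 h3 hn.
have [p10 p11 p12 p13 p14] := fb_props b1 h1.
have [p20 p21 p22 p23 p24] := fb_props b2 h2.
have [p30 p31 p32 p33 p34] := fb_props b3 h3.
set f1 := fb a1 b1 in p10 p11 p12 p13 p14.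
set f2 := fb a2 b2 in p20 p21 p22 p23 p24.
set f3 := fb a3 b3 in p30 p31 p32 p33 p34.
pose t := Num.min f1 (Num.min f2 f3).
have : t <= f1 /\ t <= f2 /\ t <= f3.
  by have := lexx t; rewrite {2}/t !le_min => /andP[-> /andP[-> ->]].
case=> l1 [l2 l3].
have tv : [\/ t = f1, t = f2 | t = f3].
  rewrite /t minEle; case: ifP => _; first by apply: Or31.
  by rewrite minEle; case: ifP => _; [apply: Or32 | apply: Or33].
have t0 : 0 <= t by case: tv => ->.
have t1 : t < 1.
  case: hn => [/p12|/p22|/p32] h; apply: le_lt_trans h => //.
exists t; split => //.
  by split; [apply: p13 | apply: p23 | apply: p33].
case: tv => e; rewrite e.
- by apply: Or31; apply: p14; rewrite -e.
- by apply: Or32; apply: p24; rewrite -e.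
- by apply: Or33; apply: p34; rewrite -e.
Qed.


Lemma side (T0 : {set {set 'I_n}}) t0 a b v w la lb s :
  triangulation P T0 -> t0 \in T0 -> v \in t0 -> w \in t0 -> v != w ->
  0 <= la -> 0 <= lb -> la + lb = 1 -> 0 < s < 1 ->
  (la * (P a).1 + lb * (P b).1, la * (P a).2 + lb * (P b).2) = lerp (P v) (P w) s ->
  exists sg tu, [/\ 0 < sg < 1, 0 < tu < 1 & lerp (P a) (P b) sg = lerp (P v) (P w) tu].
Proof.
move=> HT0 Ht0 hv hw vw la0 lb0 hs s01 E.
have [ea|na] := eqVneq la 0.
  exfalso; apply: (no_pt_edge HT0 Ht0 hv hw vw s01 (u := b)); rewrite -E ea.
  have -> : lb = 1 by move: hs; rewrite ea add0r.
  by rewrite !mul0r !add0r !mul1r -surjective_pairing.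
have [eb|nb] := eqVneq lb 0.
  exfalso; apply: (no_pt_edge HT0 Ht0 hv hw vw s01 (u := a)); rewrite -E eb.
  have -> : la = 1 by move: hs; rewrite eb addr0.
  by rewrite !mul0r !addr0 !mul1r -surjective_pairing.
have la1 : 0 < la by rewrite lt_def na.
have lb1 : 0 < lb by rewrite lt_def nb.
exists lb, s; split => //.
  apply/andP; split => //; lra.
rewrite -E /lerp; have -> : 1 - lb = la by lra.
by [].
Qed.

Lemma half (T : {set {set 'I_n}}) t p q r (T0 : {set {set 'I_n}}) t0 v w s0 :
  triangulation P T -> t \in T -> t = [set p; q; r] -> orient (P p) (P q) (P r) != 0 ->
  triangulation P T0 -> t0 \in T0 -> v \in t0 -> w \in t0 -> v != w -> 0 < s0 < 1 ->
  conv P t (lerp (P v) (P w) s0) ->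
  v \in t \/ exists a b sg tu, [/\ a \in t, b \in t, a != b, 0 < sg < 1 &
      0 < tu < 1 /\ lerp (P a) (P b) sg = lerp (P v) (P w) tu].
Proof.
move=> HT Ht Et hD HT0 Ht0 hv hw vw s01 Hc.
have [pq qr pr] := tri_neq hD.
have [a1 [a2 [a3 [h1 h2 h3 sa Ea]]]] := conv3_coords Et hD Hc.
have [b1 [b2 [b3 [sb Eb]]]] := bary_ex (P v) hD.
case: (boolP [&& 0 <= b1, 0 <= b2 & 0 <= b3]) => [/and3P[g1 g2 g3]|hn].
  left; apply: (vert_in HT Ht); rewrite Eb; exact: coords_conv.
have hn' : [\/ b1 < 0, b2 < 0 | b3 < 0].
  move: hn; rewrite !negb_and -!ltNge => /orP[->|/orP[]->]; by [apply: Or31|apply: Or32|apply: Or33].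
have [tu [t0' t1 [k1 k2 k3] kz]] := tau_pick h1 h2 h3 hn'.
right.
set g1 := (1 - tu) * a1 + tu * b1 in k1 kz.
set g2 := (1 - tu) * a2 + tu * b2 in k2 kz.
set g3 := (1 - tu) * a3 + tu * b3 in k3 kz.
have sg : g1 + g2 + g3 = 1.
  rewrite /g1 /g2 /g3.
  have -> : (1 - tu) * a1 + tu * b1 + ((1 - tu) * a2 + tu * b2) + ((1 - tu) * a3 + tu * b3)
     = (1 - tu) * (a1 + a2 + a3) + tu * (b1 + b2 + b3) by ring.
  by rewrite sa sb; ring.
have s1 : 0 < (1 - tu) * s0 < 1.
  case/andP: s01 => ? ?; apply/andP; split; nra.
have Ez : comb3 p q r g1 g2 g3 = lerp (P v) (P w) ((1 - tu) * s0).
  move: Ea Eb; rewrite /comb3 /lerp /g1 /g2 /g3 /=.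
  case: (P v) => [v1 v2]; case: (P w) => [w1 w2] /=.
  case=> E1 E2 [E3 E4]; congr pair.
  + apply/eqP; rewrite -subr_eq0; apply/eqP.
    transitivity ((1 - tu) * ((a1 * (P p).1 + a2 * (P q).1 + a3 * (P r).1) - ((1 - s0) * v1 + s0 * w1))
       + tu * ((b1 * (P p).1 + b2 * (P q).1 + b3 * (P r).1) - v1)); first by ring.
    by rewrite -E1 -E3 !subrr !mulr0 addr0.
  + apply/eqP; rewrite -subr_eq0; apply/eqP.
    transitivity ((1 - tu) * ((a1 * (P p).2 + a2 * (P q).2 + a3 * (P r).2) - ((1 - s0) * v2 + s0 * w2))
       + tu * ((b1 * (P p).2 + b2 * (P q).2 + b3 * (P r).2) - v2)); first by ring.
    by rewrite -E2 -E4 !subrr !mulr0 addr0.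
have mem : forall x, x \in [set p; q; r] -> x \in t by move=> x; rewrite Et.
case: kz => z0.
- have [sg' [tu' [hs ht he]]] : exists sg tu, [/\ 0 < sg < 1, 0 < tu < 1 & lerp (P q) (P r) sg = lerp (P v) (P w) tu].
    apply: (side HT0 Ht0 hv hw vw k2 k3 _ s1); first by move: sg; rewrite z0 add0r.
    by rewrite -Ez /comb3 z0 !mul0r !add0r.
  by exists q, r, sg', tu'; split => //; apply: mem; rewrite !inE eqxx ?orbT.
- have [sg' [tu' [hs ht he]]] : exists sg tu, [/\ 0 < sg < 1, 0 < tu < 1 & lerp (P p) (P r) sg = lerp (P v) (P w) tu].
    apply: (side HT0 Ht0 hv hw vw k1 k3 _ s1); first by move: sg; rewrite z0 addr0.
    by rewrite -Ez /comb3 z0 !mul0r !addr0.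
  by exists p, r, sg', tu'; split => //; apply: mem; rewrite !inE eqxx ?orbT.
- have [sg' [tu' [hs ht he]]] : exists sg tu, [/\ 0 < sg < 1, 0 < tu < 1 & lerp (P p) (P q) sg = lerp (P v) (P w) tu].
    apply: (side HT0 Ht0 hv hw vw k1 k2 _ s1); first by move: sg; rewrite z0 addr0.
    by rewrite -Ez /comb3 z0 !mul0r !addr0.
  by exists p, q, sg', tu'; split => //; apply: mem; rewrite !inE eqxx ?orbT.
Qed.


Lemma lerpC (x y : R * R) s : lerp x y s = lerp y x (1 - s).
Proof. by rewrite /lerp; congr pair; ring. Qed.

Lemma edge_of (T : {set {set 'I_n}}) t a b : t \in T -> a \in t -> b \in t -> a != b ->
  [set a; b] \in edges T.
Proof.
move=> Ht ha hb ab; rewrite inE cards2 ab /=; apply/exists_inP; exists t => //.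
by apply/subsetP => x; rewrite !inE => /orP[]/eqP->.
Qed.

Lemma exit (T : {set {set 'I_n}}) t (T0 : {set {set 'I_n}}) v w s0 :
  triangulation P T -> t \in T -> triangulation P T0 -> [set v; w] \in edges T0 ->
  [set v; w] \notin edges T -> 0 < s0 < 1 -> conv P t (lerp (P v) (P w) s0) ->
  exists a b sg tu, [/\ [set a; b] \in edges T, [set a; b] \subset t, 0 < sg < 1 &
     0 < tu < 1 /\ lerp (P a) (P b) sg = lerp (P v) (P w) tu].
Proof.
move=> HT Ht HT0 He0 He s01 Hc.
have [vw [t0 Ht0 /andP[hv hw]]] := edge2 He0.
have [Htri _ _ _] := HT.
have [p [q [r [Et hD]]]] := Htri t Ht.
have sub : forall a b, a \in t -> b \in t -> [set a; b] \subset t.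
  by move=> a b ha hb; apply/subsetP => x; rewrite !inE => /orP[]/eqP->.
case: (half HT Ht Et hD HT0 Ht0 hv hw vw s01 Hc) => [vt|].
- have s01' : 0 < 1 - s0 < 1 by case/andP: s01 => ? ?; apply/andP; split; lra.
  have Hc' : conv P t (lerp (P w) (P v) (1 - s0)) by rewrite -lerpC.
  have wv : w != v by rewrite eq_sym.
  case: (half HT Ht Et hD HT0 Ht0 hw hv wv s01' Hc') => [wt|].
    by move: He; rewrite (edge_of Ht vt wt vw).
  move=> [a [b [sg [tu [ha hb ab hs [ht he]]]]]].
  exists a, b, sg, (1 - tu); split; [exact: edge_of ha hb ab|exact: sub| done|].
  split; first by case/andP: ht => ? ?; apply/andP; split; lra.
  by rewrite he lerpC.
- move=> [a [b [sg [tu [ha hb ab hs [ht he]]]]]].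
  by exists a, b, sg, tu; split; [exact: edge_of ha hb ab|exact: sub| done|].
Qed.


Lemma phiP (T : {set {set 'I_n}}) (e : {set 'I_n}) x :
  reflect (x \notin e /\ exists t, [/\ t \in T, e \subset t & x \in t]) (x \in phi T e).
Proof.
rewrite /phi inE; apply: (iffP andP) => [[hx /bigcupP [t /andP[Ht he] hxt]]|[hx [t [Ht he hxt]]]].
  by split => //; exists t.
by split => //; apply/bigcupP; exists t => //; rewrite Ht he.
Qed.

Lemma tri_card t : triangle P t -> #|t| = 3.
Proof.
case=> [a [b [c [-> hD]]]]; have [ab bc ac] := tri_neq hD.
rewrite -setUA cardsU1 cards2 bc !inE negb_or ab ac.
by [].
Qed.

Lemma edge_in (T : {set {set 'I_n}}) (t g : {set 'I_n}) : t \in T -> g \subset t -> #|g| = 2 -> g \in edges T.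
Proof. by move=> Ht hg hc; rewrite inE hc eqxx /=; apply/exists_inP; exists t. Qed.

Lemma phi_card (T : {set {set 'I_n}}) (e : {set 'I_n}) : triangulation P T -> admissible P T e ->
  #|phi T e| = 2.
Proof.
move=> [Htri _ _ _] [He HS _].
have ce : #|e| = 2 by move: He; rewrite inE => /andP[/eqP].
have /cards2P [t1 [t2 [t12 ES]]] : #|[set t in T | e \subset t]| == 2 by rewrite HS.
have one : forall t, t \in T -> e \subset t -> exists c, t :\: e = [set c].
  move=> t Ht het; apply/cards1P.
  by rewrite cardsD (setIidPr het) (tri_card (Htri t Ht)) ce.
have m1 : t1 \in [set t in T | e \subset t] by rewrite ES !inE eqxx.
have m2 : t2 \in [set t in T | e \subset t] by rewrite ES !inE eqxx orbT.
move: m1 m2; rewrite !inE => /andP[H1 e1] /andP[H2 e2].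
have [c1 E1] := one t1 H1 e1.
have [c2 E2] := one t2 H2 e2.
have c1P : c1 \in t1 /\ c1 \notin e.
  have : c1 \in t1 :\: e by rewrite E1 inE.
  by rewrite inE => /andP[u1 u2]; split.
have c2P : c2 \in t2 /\ c2 \notin e.
  have : c2 \in t2 :\: e by rewrite E2 inE.
  by rewrite inE => /andP[u1 u2]; split.
have Eph : phi T e = [set c1; c2].
  apply/setP => x; apply/phiP/idP.
  - move=> [hx [t [Ht het hxt]]].
    have : t \in [set t in T | e \subset t] by rewrite inE Ht het.
    rewrite ES !inE => /orP[]/eqP Etx; subst t.
    + have : x \in t1 :\: e by rewrite inE hx hxt.
      by rewrite E1 !inE => ->.
    + have : x \in t2 :\: e by rewrite inE hx hxt.
      by rewrite E2 !inE => ->; rewrite orbT.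
  - rewrite !inE => /orP[]/eqP->.
    + by split; [case: c1P|exists t1; split => //; case: c1P].
    + by split; [case: c2P|exists t2; split => //; case: c2P].
rewrite Eph cards2; case: eqVneq => // Ec; subst c2.
case/negP: t12; apply/eqP/setP => x.
case: (boolP (x \in e)) => hx.
  by rewrite (subsetP e1 x hx) (subsetP e2 x hx).
have : (x \in t1 :\: e) = (x \in t2 :\: e) by rewrite E1 E2.
by rewrite !inE hx.
Qed.


Lemma flip_mem (T : {set {set 'I_n}}) (e t : {set 'I_n}) :
  t \in flip_res T e -> (t \in T /\ ~~ (e \subset t)) \/ exists2 v, v \in e & t = phi T e :|: [set v].
Proof.
rewrite /flip_res inE => /orP[|/imsetP [v hv ->]]; last by right; exists v.
by rewrite inE => /andP[]; left.
Qed.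

Lemma flip_E1 (T : {set {set 'I_n}}) (e g : {set 'I_n}) : triangulation P T -> admissible P T e ->
  g \in edges (flip_res T e) -> g = phi T e \/ (g \in edges T /\ g != e).
Proof.
move=> HT Ha; rewrite inE => /andP[/eqP cg /exists_inP [t' Ht' gt']].
case: (flip_mem Ht') => [[Ht ne]|[v hv Et']].
  right; split; first exact: edge_in Ht gt' cg.
  by apply/eqP => E; move: ne; rewrite -E gt'.
have cph := phi_card HT Ha.
have /cards2P [x1 [x2 [x12 Eg]]] : #|g| == 2 by rewrite cg.
have m1 : x1 \in g by rewrite Eg !inE eqxx.
have m2 : x2 \in g by rewrite Eg !inE eqxx orbT.
have in1 := subsetP gt' _ m1; have in2 := subsetP gt' _ m2.
rewrite Et' in_setU in_set1 in in1.
rewrite Et' in_setU in_set1 in in2.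
have side : forall y z, g = [set y; z] -> y = v -> z \in phi T e -> g \in edges T /\ g != e.
  move=> y z Eyz yv /phiP [hz [t [Ht het hzt]]]; split.
    apply: edge_in Ht _ cg; apply/subsetP => x; rewrite Eyz !inE => /orP[]/eqP->//.
    by rewrite yv (subsetP het).
  by apply/eqP => E; move: hz; rewrite -E Eyz !inE eqxx orbT.
case/orP: in1 => [h1|/eqP h1].
  case/orP: in2 => [h2|/eqP h2].
    left; apply/eqP; rewrite eqEcard cg cph leqnn andbT.
    by apply/subsetP => x; rewrite Eg => /set2P[]->.
  right; apply: (side x2 x1) => //; first by rewrite Eg setUC.
right; apply: (side x1 x2) => //.
case/orP: in2 => [//|/eqP h2]; by move: x12; rewrite h1 h2 eqxx.
Qed.

Lemma flip_E2 (T : {set {set 'I_n}}) (e g : {set 'I_n}) : triangulation P T -> admissible P T e ->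
  g \in edges T -> g != e -> g \in edges (flip_res T e).
Proof.
move=> HT [He _ _]; rewrite inE => /andP[/eqP cg /exists_inP [t Ht gt]] ge.
case: (boolP (e \subset t)) => het; last first.
  by apply: edge_in gt cg; rewrite /flip_res !inE Ht het.
have ce : #|e| == 2 by move: He; rewrite inE => /andP[].
have /cards2P [v1 [v2 [v12 Ee]]] := ce.
have notboth : ~~ ((v1 \in g) && (v2 \in g)).
  apply/negP => /andP[h1 h2]; case/negP: ge; rewrite eq_sym eqEcard cg.
  rewrite (eqP ce) leqnn andbT; apply/subsetP => x; by rewrite Ee !inE => /orP[]/eqP->.
have key : forall v v', e = [set v; v'] -> v' \notin g -> g \in edges (flip_res T e).
  move=> v v' Evv nv'; apply: (edge_in (t := phi T e :|: [set v])) cg.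
    by rewrite /flip_res inE; apply/orP; right; apply: imset_f; rewrite Evv !inE eqxx.
  apply/subsetP => x xg; have xt := subsetP gt x xg.
  case: (boolP (x \in e)) => xe.
    move: xe; rewrite Evv !inE => /orP[]/eqP E; subst x; first by rewrite eqxx orbT.
    by move: nv'; rewrite xg.
  rewrite inE; apply/orP; left; apply/phiP; split => //; by exists t.
move: notboth; rewrite negb_and => /orP[n1|n2].
  by apply: (key v2 v1) => //; rewrite Ee setUC.
exact: (key v1 v2).
Qed.

Lemma flip_E3 (T : {set {set 'I_n}}) (e : {set 'I_n}) : triangulation P T -> admissible P T e ->
  phi T e \in edges (flip_res T e).
Proof.
move=> HT Ha; have cph := phi_card HT Ha.
have [He _ _] := Ha.
have /cards2P [v1 [v2 [v12 Ee]]] : #|e| == 2 by move: He; rewrite inE => /andP[].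
apply: (edge_in (t := phi T e :|: [set v1])) cph; last exact: subsetUl.
by rewrite /flip_res inE; apply/orP; right; apply: imset_f; rewrite Ee !inE eqxx.
Qed.

Lemma geo_step (T : {set {set 'I_n}}) (e0 e : {set 'I_n}) (T0 : {set {set 'I_n}}) :
  triangulation P T -> admissible P T e0 -> triangulation P T0 -> e \in edges T0 ->
  e \notin edges T -> crosses P (phi T e0) e ->
  exists2 s, s \in edges T & crosses P s e /\ ((s == e0) || share_tri T s e0).
Proof.
move=> HT [He0 _ Hcv] HT0 He0' He [_ [a [b [c [d [s [u [Eph Ee hs hu Ex]]]]]]]].
have reg : forall x, x \in phi T e0 -> exists t, [/\ t \in T, e0 \subset t & conv P t (P x)].
  move=> x /phiP [_ [t [Ht het hxt]]]; exists t; split => //; exact: conv_vertex.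
have [t [Ht het Hc]] : exists t, [/\ t \in T, e0 \subset t & conv P t (lerp (P a) (P b) s)].
  apply: Hcv; [apply: reg; by rewrite Eph !inE eqxx ?orbT|apply: reg; by rewrite Eph !inE eqxx ?orbT|].
  by case/andP: hs => ? ?; apply/andP; split; lra.
rewrite Ex in Hc; rewrite Ee in He He0'.
have [a' [b' [sg [tu [Hs sub hsg [htu Eq]]]]]] := exit HT Ht HT0 He0' He hu Hc.
exists [set a'; b'] => //; split.
  split; first by apply/eqP => E; move: He; rewrite -Ee -E Hs.
  by exists a', b', c, d, sg, tu; split.
case: eqVneq => //= ne; rewrite /share_tri ne /=; apply/exists_inP; exists t => //; by rewrite sub het.
Qed.

End Geo.

Theorem lemma3 (R : realFieldType) (n : nat) (P : 'I_n -> (R * R)%type)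
  (HP : injective P) (Ti Tf : {set {set 'I_n}}) (k : nat) (F : seq {set 'I_n})
  (Hsol : solution P Ti Tf k F) (Hnorm : normalized Ti Tf F)
  (C : {set 'I_(size F)}) (HC : component Ti F C)
  (i h : 'I_(size F)) (Hih : (i < h)%N) (Hne : eps F i != eps F h)
  (HiC : i \in C) (HhC : h \in C)
  (Hcross : crosses P (phiF Ti F h) (eps F i))
  (Hnf : forall p : 'I_(size F), (i < p)%N -> (p < h)%N -> eps F p != eps F i) :
  exists s : seq 'I_(size F),
    [/\ path (adjD Ti F) i s, last i s = h & all (fun x => x \in C) (i :: s)].
Proof.
have [HTi _ [_ Hstep _] _ _] := Hsol.
have Hout : forall j, (j < size F)%N -> outcome Ti F j.+1 = flip_res (outcome Ti F j) (eps F j).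
  by move=> j hj; rewrite /outcome (take_nth set0) // foldl_rcons.
have Htri : forall j, (j <= size F)%N -> triangulation P (outcome Ti F j).
  case=> [_|j hj]; first by rewrite /outcome take0.
  by have [] := Hstep j hj.
have Hadm : forall j, (j < size F)%N -> admissible P (outcome Ti F j) (eps F j).
  by move=> j hj; have [] := Hstep j hj.
have hN : (h < size F)%N := ltn_ord h.
have iN : (i < size F)%N := ltn_ord i.
have [phine [a0 [b0 [c0 [d0 [s0 [u0 [Eph Ee hs hu Ex]]]]]]]] := Hcross.
set e := eps F i in Ee phine Hnf Hne Hcross *.
have e_in : e \in edges (outcome Ti F i) by have [] := Hadm i iN.
have Notin : forall j, (i < j)%N -> (j <= h)%N -> e \notin edges (outcome Ti F j).
  move=> j ij jh; apply/negP => ej.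
  have prop : forall d, (j + d <= h.+1)%N -> e \in edges (outcome Ti F (j + d)).
    elim=> [|d IH] hd; first by rewrite addn0.
    have hd' : (j + d <= h)%N by rewrite addnS in hd.
    have hjd : (j + d < size F)%N by apply: leq_ltn_trans hd' hN.
    rewrite addnS (Hout _ hjd); apply: flip_E2.
    - exact: Htri (ltnW hjd).
    - exact: Hadm.
    - by apply: IH; apply: ltnW.
    - case: (ltngtP (j + d) h) => [lt||eq].
      + by rewrite eq_sym; apply: (Hnf (Ordinal hjd)) => //=; apply: leq_trans ij (leq_addr _ _).
      + by move=> hgt; move: (leq_trans hgt hd'); rewrite ltnn.
      + have -> : eps F (j + d) = eps F h by rewrite eq.
        by [].
  have eh1 : e \in edges (outcome Ti F h.+1).
    have jh1 : (j <= h.+1)%N by apply: leq_trans jh (leqnSn h).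
    by have := prop (h.+1 - j); rewrite subnKC // => /(_ (leqnn _)).
  have ph : phiF Ti F h \in edges (outcome Ti F h.+1).
    by rewrite (Hout _ hN); apply: flip_E3; [exact: Htri (ltnW hN) | exact: Hadm].
  rewrite Eph in ph; rewrite Ee in eh1.
  have := nocross (Htri _ hN) ph eh1 hs hu Ex.
  by rewrite -Eph -Ee => E; move: phine; rewrite E eqxx.
pose reach (a b : 'I_(size F)) := exists s, path (adjD Ti F) a s /\ last a s = b.
pose Inv (j : nat) := forall g, g \in edges (outcome Ti F j) -> crosses P g e ->
  exists p : 'I_(size F), [/\ (i <= p)%N, (p < j)%N, phiF Ti F p = g, reach i p &
     forall q : 'I_(size F), (p < q)%N -> (q < j)%N -> eps F q != g].
have REACH : forall j : 'I_(size F), (i < j)%N -> (j <= h)%N -> Inv j ->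
    crosses P (phiF Ti F j) e -> reach i j.
  move=> j ij jh Hinv Hc.
  have jN := ltn_ord j.
  have [s Hs [Hcs Hsh]] := geo_step (Htri _ (ltnW jN)) (Hadm _ jN) (Htri _ (ltnW iN)) e_in
     (Notin _ ij jh) Hc.
  have [p [ip pj Ep [sq [Hp Hl]] Hq]] := Hinv s Hs Hcs.
  exists (rcons sq j); split; last by rewrite last_rcons.
  rewrite rcons_path Hp Hl /=.
  rewrite /adjD pj Ep Hsh /=.
  apply/forallP => q; apply/implyP => /andP[pq qj]; exact: Hq.
have Inv_all : forall d, (i.+1 + d <= h)%N -> Inv (i.+1 + d).
  elim=> [|d IH] hd.
  - rewrite addn0 => g; rewrite (Hout _ iN) => Hg Hgc.
    case: (flip_E1 (Htri _ (ltnW iN)) (Hadm _ iN) Hg) => [Eg|[Hg' gne]].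
      exists i; split => //.
      + by exists [::].
      + by move=> q iq qi; move: (leq_trans iq qi); rewrite ltnn.
    have [gne' [a [b [c [d [s [u [Eg Ee' hs' hu' Ex']]]]]]]] := Hgc.
    rewrite Eg in Hg'; rewrite Ee' in e_in.
    have := nocross (Htri _ (ltnW iN)) Hg' e_in hs' hu' Ex'.
    by rewrite -Eg -Ee' => E; move: gne'; rewrite E eqxx.
  - have hd' : (i.+1 + d <= h)%N by apply: leq_trans hd; rewrite addnS.
    have Hj := IH hd'.
    set j := (i.+1 + d)%N in Hj hd' hd *.
    have jN : (j < size F)%N by apply: leq_ltn_trans hd' hN.
    have ij : (i < j)%N by rewrite /j leq_addr.
    rewrite addnS -/j => g; rewrite (Hout _ jN) => Hg Hgc.
    case: (flip_E1 (Htri _ (ltnW jN)) (Hadm _ jN) Hg) => [Eg|[Hg' gne]].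
      exists (Ordinal jN); split => //=.
      + exact: ltnW.
      + apply: (REACH (Ordinal jN)) => //=.
        by rewrite /phiF -Eg.
      + by move=> q jq qj; move: (leq_trans jq qj); rewrite ltnn.
    have [p [ip pj Ep Hr Hq]] := Hj g Hg' Hgc.
    exists p; split => //; first exact: ltnW.
    move=> q pq; rewrite ltnS leq_eqVlt => /orP[/eqP qj|qj]; last exact: Hq.
    by rewrite qj eq_sym.
have Invh : Inv h.
  by have := Inv_all (h - i.+1); rewrite subnKC // => /(_ (leqnn _)).
have [s [Hp Hl]] := REACH h Hih (leqnn _) Invh Hcross.
exists s; split => //.
have [v Ev] := HC.
have Hiv : connect (wadj Ti F) v i by move: HiC; rewrite Ev inE.
have Hp' : path (wadj Ti F) i s.
  by apply: sub_path Hp => x y hxy; rewrite /wadj hxy.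
apply/allP => x hx; rewrite Ev inE; apply: connect_trans Hiv _.
exact: path_connect Hp' x hx.
Qed.
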